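(* For every positive integer $k$ there exists a GNN in the class $\mathcal{G}(L_k)$ that discriminates all graphs with at most $k+1$ nodes; that is, for any two graphs $G_1,G_2$ with at most $k+1$ nodes, the graph-level outputs of this GNN on $G_1$ and $G_2$ coincide if and only if $G_1\cong G_2$.
   Context: Graphs $G=(V,E)$ are finite, undirected, unweighted, with a self-loop at every vertex; $A$ is the adjacency matrix. For $v\in V$, $W_m(v)$ denotes the set of walks of length at most $m$ starting and ending at $v$; $L_k(v)$ is the subgraph formed by all vertices and edges occurring in walks of $W_{2k+1}(v)$ (all vertices within distance $k$ of $v$ together with all edges among them), and $D_k(v)$ is the analogous subgraph for $W_{2k}(v)$. A GNN layer computes $a^{(\ell)}_v=\mathrm{AGGREGATE}|_{G_v}(H^{(\ell-1)})$ and $h^{(\ell)}_v=\mathrm{COMBINE}(h^{(\ell-1)}_v,a^{(\ell)}_v)$, where the aggregation region $G_v$ is a connected subgraph containing $v$ and AGGREGATE (which may depend on the structure of $G_v$) is invariant under node relabeling. $\mathcal{G}(L_k)$ denotes the class of GNNs with aggregation region $G_v=L_k(v)$. The graph-level output of a GNN is a permutation-invariant function of the multiset of final node representations. *)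

(* Defs.v *)
From mathcomp Require Import all_boot.
Unset Printing Implicit Defensive.

Record graph := Graph {
  gn : nat;
  gadj : rel 'I_gn;
  gadj_refl : reflexive gadj;
  gadj_sym : symmetric gadj }.

Definition iso (G1 G2 : graph) : Prop :=
  exists f : 'I_(gn G1) -> 'I_(gn G2),
    bijective f /\ forall x y, gadj G2 (f x) (f y) = gadj G1 x y.

Fixpoint within (G : graph) (k : nat) (v u : 'I_(gn G)) : bool :=
  match k with
  | 0 => u == v
  | k'.+1 => [exists w, within G k' v w && gadj G w u]
  end.

Definition Lk_vert (G : graph) (k : nat) (v : 'I_(gn G)) : finType :=
  {u : 'I_(gn G) | within G k v u}.

Definition Lk_adj (G : graph) (k : nat) (v : 'I_(gn G)) : rel (Lk_vert G k v) :=
  fun x y => gadj G (val x) (val y).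

Record GNN (X : eqType) (Y : Type) := MkGNN {
  nlayers : nat;
  h0 : X;  (* initial (constant) node feature: graphs are unlabelled *)
  (* AGGREGATE of layer l+1: applied to the aggregation region
     (a finite vertex type, its edge relation, and the node features on it) *)
  aggr : nat -> forall T : finType, rel T -> (T -> X) -> X;
  comb : nat -> X -> X -> X;
  readout : seq X -> Y }.
Arguments nlayers {X Y}.
Arguments h0 {X Y}.
Arguments aggr {X Y}.
Arguments comb {X Y}.
Arguments readout {X Y}.

Definition aggr_invariant {X : eqType}
    (agg : forall T : finType, rel T -> (T -> X) -> X) : Prop :=
  forall (T1 T2 : finType) (e1 : rel T1) (e2 : rel T2)
         (h1 : T1 -> X) (h2 : T2 -> X) (f : T1 -> T2),
    bijective f ->
    (forall x y, e2 (f x) (f y) = e1 x y) ->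
    (forall x, h2 (f x) = h1 x) ->
    agg T1 e1 h1 = agg T2 e2 h2.

Definition wf_gnn {X : eqType} {Y : Type} (N : GNN X Y) : Prop :=
  (forall l, aggr_invariant (aggr N l)) /\
  (forall s1 s2 : seq X, perm_eq s1 s2 -> readout N s1 = readout N s2).

Fixpoint feat {X : eqType} {Y : Type} (N : GNN X Y) (k : nat) (G : graph)
    (l : nat) (v : 'I_(gn G)) : X :=
  match l with
  | 0 => h0 N
  | l'.+1 =>
      comb N l' (feat N k G l' v)
        (aggr N l' (Lk_vert G k v) (Lk_adj G k v)
           (fun u : Lk_vert G k v => feat N k G l' (val u)))
  end.

Definition gnn_out {X : eqType} {Y : Type} (N : GNN X Y) (k : nat) (G : graph) : Y :=
  readout N [seq feat N k G (nlayers N) v | v <- enum 'I_(gn G)].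

(* Main.v *)
From HB Require Import structures.
Require Import Defs.
From mathcomp Require Import all_boot.
From mathcomp Require Import boolp zify.
Set Implicit Arguments. Unset Strict Implicit.

Definition codeT := forall n : nat, rel 'I_n -> Prop.
HB.instance Definition _ := gen_eqMixin codeT.

Definition isoR (T1 T2 : finType) (e1 : rel T1) (e2 : rel T2) : Prop :=
  exists f : T1 -> T2, bijective f /\ forall x y, e2 (f x) (f y) = e1 x y.

Lemma isoR_sym (T1 T2 : finType) (e1 : rel T1) (e2 : rel T2) :
  isoR e1 e2 -> isoR e2 e1.
Proof.
move=> [f [[g fK gK] H]]; exists g; split; first by exists f.
by move=> x y; rewrite -H !gK.
Qed.

Lemma isoR_trans (T1 T2 T3 : finType) (e1 : rel T1) (e2 : rel T2) (e3 : rel T3) :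
  isoR e1 e2 -> isoR e2 e3 -> isoR e1 e3.
Proof.
move=> [f [bf Hf]] [g [bg Hg]]; exists (g \o f); split; first exact: bij_comp.
by move=> x y /=; rewrite Hg Hf.
Qed.

Definition code (T : finType) (e : rel T) : codeT := fun n r => isoR r e.
Arguments code {T} e n r.

Lemma code_iso (T1 T2 : finType) (e1 : rel T1) (e2 : rel T2) :
  isoR e1 e2 -> code e1 = code e2.
Proof.
move=> H; apply: functional_extensionality_dep => n; apply: funext => r; apply: propext; rewrite /code; split.
  by move=> H1; apply: isoR_trans H1 H.
by move=> H1; apply: isoR_trans H1 (isoR_sym H).
Qed.

Lemma code_eq_iso (T1 T2 : finType) (e1 : rel T1) (e2 : rel T2) :
  code e1 = code e2 -> isoR e1 e2.
Proof.
move=> H.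
have h2 : code e2 #|T2| (fun i j => e2 (enum_val i) (enum_val j)).
  exists enum_val; split => //; exists enum_rank; [exact: enum_valK | exact: enum_rankK].
rewrite -H in h2; apply: isoR_trans (isoR_sym h2) _.
exists enum_val; split => //; exists enum_rank; [exact: enum_valK | exact: enum_rankK].
Qed.

Definition subR (T : finType) (e : rel T) (P : pred T) : rel {x | P x} :=
  fun x y => e (val x) (val y).
Arguments subR {T} e P.

Lemma sub_iso (T : finType) (e : rel T) (P Q : pred T) :
  P =1 Q -> isoR (subR e P) (subR e Q).
Proof.
move=> PQ.
have fP (x : {x | P x}) : Q (val x) by rewrite -PQ (valP x).
have gP (x : {x | Q x}) : P (val x) by rewrite PQ (valP x).
exists (fun x => exist _ (val x) (fP x)); split => //.
exists (fun x => exist _ (val x) (gP x)) => x; apply: val_inj => //.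
Qed.

Lemma within_connect (G : graph) k v u : within G k v u -> connect (gadj G) v u.
Proof.
elim: k u => [|k IH] u /=; first by move/eqP->; exact: connect0.
move/existsP=> [w /andP[/IH Hw e]]; apply: connect_trans Hw (connect1 e).
Qed.

Lemma within_mono (G : graph) m k v u : m <= k -> within G m v u -> within G k v u.
Proof.
elim: k => [|k IH]; first by rewrite leqn0 => /eqP->.
rewrite leq_eqVlt => /orP[/eqP->//|/IH H /H Hw] /=.
by apply/existsP; exists u; rewrite Hw gadj_refl.
Qed.

Lemma path_within (G : graph) v p :
  path (gadj G) v p -> within G (size p) v (last v p).
Proof.
elim/last_ind: p => [|p x IH] /=; first by [].
rewrite rcons_path size_rcons last_rcons => /andP[/IH H e] /=.
by apply/existsP; exists (last v p); rewrite H e.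
Qed.

Lemma connect_within (G : graph) k v u :
  gn G <= k.+1 -> connect (gadj G) v u -> within G k v u.
Proof.
move=> hn /connectP[p pth ->].
case: (shortenP pth) => p' pth' up _.
apply: within_mono (path_within pth').
move/card_uniqP: up => Hs.
have := max_card (mem (v :: p')); rewrite Hs card_ord /= => H.
by rewrite -ltnS; apply: leq_trans H hn.
Qed.
Definition F (T : finType) (e : rel T) (v : T) : codeT := code (subR e (connect e v)).

Lemma F_same (T : finType) (e : rel T) (s : symmetric e) v u :
  connect e v u -> F e u = F e v.
Proof.
move=> H; apply: code_iso; apply: sub_iso.
apply: same_connect; first exact: sym_connect_sym.
by rewrite (sym_connect_sym s).
Qed.

Lemma cntsplit (T : finType) (X : eqType) (G : T -> X) (A C : {set T}) c :
  {subset C <= A} -> (forall u, u \in C -> G u = c) ->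
  forall c', #|[set x in A | G x == c']| =
             #|[set x in A :\: C | G x == c']| + (if c' == c then #|C| else 0).
Proof.
move=> CA GC c'; rewrite -(cardsID C [set x in A | G x == c']) addnC.
congr (_ + _).
  by apply: eq_card => x; rewrite !inE andbA.
case: eqP => [->|ne].
  apply: eq_card => x; rewrite !inE; case xC: (x \in C); last by rewrite andbF.
  by rewrite (CA _ xC) (GC _ xC) eqxx.
apply: eq_card0 => x; rewrite !inE; case xC: (x \in C); last by rewrite andbF.
rewrite (GC _ xC) andbT.
have /negbTE -> : c != c' by apply/eqP => H; apply: ne; rewrite H.
by rewrite andbF.
Qed.

Lemma cross (T : finType) (e : rel T) v a b :
  connect e v a -> ~~ connect e v b -> e a b = false.
Proof.
move=> Ha Hb; apply/negP => eab; move/negP: Hb; apply.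
exact: connect_trans Ha (connect1 eab).
Qed.

Lemma assemble0 (T1 T2 : finType) (e1 : rel T1) (e2 : rel T2) (w0 : T2)
  (A1 : {set T1}) (A2 : {set T2}) : A1 = set0 ->
 (forall c, #|[set x in A1 | F e1 x == c]| = #|[set x in A2 | F e2 x == c]|) ->
 exists f : T1 -> T2, [/\ {in A1 &, injective f}, {in A1, forall x, f x \in A2},
   #|A1| = #|A2| & {in A1 &, forall x y, e2 (f x) (f y) = e1 x y}].
Proof.
move=> A10 hc.
have A20 : A2 = set0.
  case: (set_0Vmem A2) => [//|[w wA2]].
  have : 0 < #|[set x in A2 | F e2 x == F e2 w]|.
    by apply/card_gt0P; exists w; rewrite inE wA2 eqxx.
  by rewrite -hc => /card_gt0P [x]; rewrite inE A10 inE.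
exists (fun _ => w0); split; rewrite ?A10 ?A20 ?cards0 //; by move=> x; rewrite inE.
Qed.

Lemma assemble (T1 T2 : finType) (e1 : rel T1) (e2 : rel T2)
  (s1 : symmetric e1) (s2 : symmetric e2) (w0 : T2) n :
 forall (A1 : {set T1}) (A2 : {set T2}), #|A1| <= n ->
 (forall x y, connect e1 x y -> x \in A1 -> y \in A1) ->
 (forall x y, connect e2 x y -> x \in A2 -> y \in A2) ->
 (forall c, #|[set x in A1 | F e1 x == c]| = #|[set x in A2 | F e2 x == c]|) ->
 exists f : T1 -> T2, [/\ {in A1 &, injective f}, {in A1, forall x, f x \in A2},
   #|A1| = #|A2| & {in A1 &, forall x y, e2 (f x) (f y) = e1 x y}].
Proof.
have cs1 := sym_connect_sym s1; have cs2 := sym_connect_sym s2.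
elim: n => [|n IH] A1 A2 hA cl1 cl2 hc;
  (case: (set_0Vmem A1) => [A10|[v vA1]]; first exact: assemble0).
  by move: hA; rewrite leqn0 => /eqP/cards0_eq A10; rewrite A10 inE in vA1.
set c := F e1 v.
have [w /andP[wA2 /eqP Fw]] : exists w, (w \in A2) && (F e2 w == c).
  have : 0 < #|[set x in A1 | F e1 x == c]|.
    by apply/card_gt0P; exists v; rewrite inE vA1 eqxx.
  by rewrite hc => /card_gt0P [w]; rewrite inE => H; exists w.
have [phi [bphi Hphi]] : isoR (subR e1 (connect e1 v)) (subR e2 (connect e2 w)).
  by apply: code_eq_iso; exact: (esym Fw).
set C1 := [set u | connect e1 v u]; set C2 := [set u | connect e2 w u].
have C1A1 : {subset C1 <= A1} by move=> u; rewrite inE => H; exact: cl1 H vA1.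
have C2A2 : {subset C2 <= A2} by move=> u; rewrite inE => H; exact: cl2 H wA2.
have FC1 u : u \in C1 -> F e1 u = c by rewrite inE => H; exact: F_same.
have FC2 u : u \in C2 -> F e2 u = c by rewrite inE -Fw => H; exact: F_same.
have cardC : #|C1| = #|C2|.
  have := bij_eq_card bphi; rewrite !card_sig.
  have -> : #|C1| = #|[pred x | connect e1 v x]| by apply: eq_card => x; rewrite inE.
  by have -> : #|C2| = #|[pred x | connect e2 w x]| by apply: eq_card => x; rewrite inE.
set A1' := A1 :\: C1; set A2' := A2 :\: C2.
have hc' c' : #|[set x in A1' | F e1 x == c']| = #|[set x in A2' | F e2 x == c']|.
  move: (hc c'); rewrite (cntsplit C1A1 FC1) (cntsplit C2A2 FC2) cardC.
  by move/addIn.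
have cl1' x y : connect e1 x y -> x \in A1' -> y \in A1'.
  move=> cxy; rewrite !inE => /andP[xnC xA]; rewrite (cl1 _ _ cxy xA) andbT.
  apply/negP => cvy; move/negP: xnC; apply; apply: connect_trans cvy _.
  by rewrite cs1.
have cl2' x y : connect e2 x y -> x \in A2' -> y \in A2'.
  move=> cxy; rewrite !inE => /andP[xnC xA]; rewrite (cl2 _ _ cxy xA) andbT.
  apply/negP => cvy; move/negP: xnC; apply; apply: connect_trans cvy _.
  by rewrite cs2.
have cA1 : #|A1| = #|C1| + #|A1'|.
  by rewrite -(cardsID C1 A1) (setIidPr _) //; apply/subsetP.
have cA2 : #|A2| = #|C2| + #|A2'|.
  by rewrite -(cardsID C2 A2) (setIidPr _) //; apply/subsetP.
have hA' : #|A1'| <= n.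
  have : 0 < #|C1| by apply/card_gt0P; exists v; rewrite inE connect0.
  move: hA; rewrite cA1; lia.
have [psi [ipsi mpsi cpsi ppsi]] := IH A1' A2' hA' cl1' cl2' hc'.
pose f x := if (insub x : option {u | connect e1 v u}) is Some y then val (phi y)
            else psi x.
have fin x (Px : connect e1 v x) : f x = val (phi (exist _ x Px)).
  by rewrite /f insubT.
have fout x : ~~ connect e1 v x -> f x = psi x.
  by move=> Px; rewrite /f insubF //; apply: negbTE.
have inA1' x : x \in A1 -> ~~ connect e1 v x -> x \in A1'.
  by move=> xA Px; rewrite /A1' in_setD inE Px xA.
have inA2' y : y \in A2' -> (y \in A2) && ~~ connect e2 w y.
  by rewrite /A2' in_setD inE andbC.
have fC x : x \in A1 -> connect e2 w (f x) = connect e1 v x.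
  move=> xA; case: (boolP (connect e1 v x)) => Px.
    by rewrite (fin x Px) (valP (phi _)).
  rewrite (fout x Px); have := inA2' _ (mpsi _ (inA1' _ xA Px)).
  by case/andP => _ /negbTE.
exists f; split.
- move=> x y xA yA.
  case: (boolP (connect e1 v x)) => Px; case: (boolP (connect e1 v y)) => Py.
  + rewrite (fin x Px) (fin y Py) => /val_inj /(bij_inj bphi) /(congr1 val) //.
  + move=> H; have := fC x xA; rewrite H (fC y yA) Px (negbTE Py) //.
  + move=> H; have := fC x xA; rewrite H (fC y yA) Py (negbTE Px) //.
  + rewrite (fout x Px) (fout y Py); apply: ipsi; exact: inA1'.
- move=> x xA; case: (boolP (connect e1 v x)) => Px.
    by rewrite (fin x Px); apply: C2A2; rewrite inE (valP (phi _)).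
  by rewrite (fout x Px); case/andP: (inA2' _ (mpsi _ (inA1' _ xA Px))).
- by rewrite cA1 cA2 cardC cpsi.
- move=> x y xA yA.
  case: (boolP (connect e1 v x)) => Px; case: (boolP (connect e1 v y)) => Py.
  + by rewrite (fin x Px) (fin y Py); exact: Hphi.
  + rewrite (cross Px Py) (@cross _ _ w) ?fC //; by rewrite fC.
  + rewrite s1 s2 (cross Py Px) (@cross _ _ w) ?fC //; by rewrite fC.
  + by rewrite (fout x Px) (fout y Py); apply: ppsi; exact: inA1'.
Qed.
Lemma count_card (T : finType) (X : eqType) (G : T -> X) c :
  #|[set x in [set: T] | G x == c]| = count (pred1 c) (map G (enum T)).
Proof.
rewrite count_map cardE /enum_mem size_filter count_filter; apply: eq_count => x.
by rewrite !inE /= andbT.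
Qed.

Definition theN : GNN codeT (seq codeT -> bool) :=
  @MkGNN codeT (seq codeT -> bool) 1 (fun _ _ => False)
    (fun _ T e _ => code e) (fun _ _ a => a) (fun s t => perm_eq s t).

Lemma featF (G : graph) k v : gn G <= k.+1 ->
  code (Lk_adj G k v) = F (gadj G) v.
Proof.
move=> hn; apply: (@code_iso _ _ (subR (gadj G) (within G k v))).
apply: sub_iso => u; apply/idP/idP; [exact: within_connect | exact: connect_within].
Qed.

Lemma within_iso (G1 G2 : graph) (f : 'I_(gn G1) -> 'I_(gn G2)) g
  (fK : cancel f g) (gK : cancel g f)
  (H : forall x y, gadj G2 (f x) (f y) = gadj G1 x y) k v u :
  within G2 k (f v) (f u) = within G1 k v u.
Proof.
elim: k u => [|k IH] u /=; first by rewrite (inj_eq (can_inj fK)).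
apply/existsP/existsP => [[w2 /andP[h e]]|[w1 /andP[h e]]].
  by exists (g w2); rewrite -IH gK h /= -H gK e.
by exists (f w1); rewrite IH H h e.
Qed.

Lemma iso_code (G1 G2 : graph) (f : 'I_(gn G1) -> 'I_(gn G2)) g
  (fK : cancel f g) (gK : cancel g f)
  (H : forall x y, gadj G2 (f x) (f y) = gadj G1 x y) k v :
  code (Lk_adj G1 k v) = code (Lk_adj G2 k (f v)).
Proof.
apply: code_iso.
have fP (x : Lk_vert G1 k v) : within G2 k (f v) (f (val x)).
  by rewrite (within_iso fK gK H) (valP x).
have gP (y : Lk_vert G2 k (f v)) : within G1 k v (g (val y)).
  by rewrite -(within_iso fK gK H) gK (valP y).
exists (fun x => exist _ (f (val x)) (fP x)); split.
  exists (fun y => exist _ (g (val y)) (gP y)) => x; apply: val_inj => /=.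
    by rewrite fK.
  by rewrite gK.
by move=> x y; rewrite /Lk_adj /= H.
Qed.

Theorem theorem4 (k : nat) (hk : 0 < k) :
  exists (X : eqType) (Y : Type) (N : GNN X Y),
    wf_gnn N /\
    forall G1 G2 : graph, gn G1 <= k.+1 -> gn G2 <= k.+1 ->
      (gnn_out N k G1 = gnn_out N k G2 <-> iso G1 G2).
Proof.
exists codeT, (seq codeT -> bool), theN; split.
  split.
    move=> l T1 T2 e1 e2 h1 h2 f bf Hf _; apply: code_iso; by exists f.
  move=> s1 s2 /permPl H; apply: funext => t /=; exact: H.
move=> G1 G2 h1 h2; rewrite /gnn_out /=.
set S1 := map _ _; set S2 := map _ _.
suff key : perm_eq S1 S2 <-> iso G1 G2.
  split.
    by move=> E; apply/key; have := congr1 (fun h => h S2) E; rewrite /= perm_refl.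
  by move/key/permPl => H; apply: funext => t; exact: H.
split.
  move=> P.
  have Hn : gn G1 = gn G2.
    by move/perm_size: P; rewrite !size_map -!enumT !size_enum_ord.
  case: (posnP (gn G1)) => [H0|Hpos].
    exists (cast_ord Hn); split.
      by exists (cast_ord (esym Hn)); [apply: cast_ordK | apply: cast_ordKV].
    by move=> x; have := ltn_ord x; rewrite {2}H0.
  have E1 : S1 = map (F (gadj G1)) (enum 'I_(gn G1)) by apply: eq_map => v; exact: featF.
  have E2 : S2 = map (F (gadj G2)) (enum 'I_(gn G2)) by apply: eq_map => v; exact: featF.
  rewrite E1 E2 in P.
  have [f [inj _ cE pres]] :=
    @assemble _ _ _ _ (@gadj_sym G1) (@gadj_sym G2) (cast_ord Hn (Ordinal Hpos))
      #|[set: 'I_(gn G1)]| setT setT (leqnn _)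
      (fun x y _ _ => in_setT y) (fun x y _ _ => in_setT y)
      (fun c => etrans (count_card _ c) (etrans (permP P (pred1 c)) (esym (count_card _ c)))).
  exists f; split.
    apply: inj_card_bij; first by move=> x y; exact: inj (in_setT x) (in_setT y).
    by move: cE; rewrite !cardsT => ->.
  by move=> x y; exact: pres (in_setT x) (in_setT y).
case=> f [[g fK gK] H].
have -> : S1 = map (fun v => code (Lk_adj G2 k v)) (map f (enum 'I_(gn G1))).
  by rewrite -map_comp; apply: eq_map => v; exact: iso_code.
apply: perm_map; apply: uniq_perm.
- by rewrite map_inj_uniq ?enum_uniq //; exact: can_inj fK.
- exact: enum_uniq.
- move=> y; rewrite mem_enum; apply/mapP; exists (g y); by rewrite ?mem_enum ?gK.
Qed.
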